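(* Let $p>1$ be an integer, let $d_1,\dots,d_p\in(0,\tfrac12)$, and let $(\varepsilon_t)_{t\in\mathbb{Z}}$ be a zero-mean white noise (pairwise uncorrelated, $E\varepsilon_t=0$) with finite variances $\sigma_t^2$ satisfying $\sigma_{t+p}^2=\sigma_t^2$. Write each $t\in\mathbb{Z}$ uniquely as $t=i+pm$ with $i\in\{1,\dots,p\}$, $m\in\mathbb{Z}$, and define the process $X_{i+pm}=\sum_{j=0}^{\infty}\psi_j^i\varepsilon_{i+pm-j}$ (limit in $L^2$), where $\psi_j^i=\frac{\Gamma(j+d_i)}{\Gamma(j+1)\Gamma(d_i)}$. Let $\pi_j^i=\frac{\Gamma(j-d_i)}{\Gamma(j+1)\Gamma(-d_i)}$. Then for every $i\in\{1,\dots,p\}$ and $m\in\mathbb{Z}$, the series $\sum_{j=0}^{\infty}\pi_j^iX_{i+pm-j}$ converges in quadratic mean.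
   Context: $(X_t)$ is the periodic fractionally integrated process PtvARFIMA$_p(0,d_t,0)$, i.e. the causal solution of $(1-B)^{d_i}X_{i+pm}=\varepsilon_{i+pm}$ with $B$ the backshift operator; the series $\sum_j\pi_j^iX_{i+pm-j}$ is the infinite autoregressive representation $(1-B)^{d_i}X_{i+pm}$. *)

(* Defs.v *)
From HB Require Import structures.
From mathcomp Require Import all_boot all_order all_algebra.
From mathcomp Require Import all_classical all_reals all_analysis.
Set Implicit Arguments. Unset Strict Implicit. Unset Printing Implicit Defensive.
Import Order.TTheory GRing.Theory Num.Theory.
Local Open Scope ring_scope.
Local Open Scope classical_set_scope.

(* gamma_ratio a j = Gamma(j+a) / (Gamma(j+1) Gamma(a)),
   written via the (exact) product identity
   Gamma(j+a)/Gamma(a) = prod_{k=1}^{j} (k-1+a), valid whenever Gamma(a)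
   is defined (a not a non-positive integer). *)
Definition gamma_ratio {R : realType} (a : R) (j : nat) : R :=
  \prod_(1 <= k < j.+1) (((k.-1)%:R + a) / k%:R).

Definition psi_coef {R : realType} (dd : R) (j : nat) : R := gamma_ratio dd j.
Definition pi_coef {R : realType} (dd : R) (j : nat) : R := gamma_ratio (- dd) j.

Definition qm_cvg {d} {T : measurableType d} {R : realType}
  (P : probability T R) (S : nat -> T -> R) (Y : T -> R) : Prop :=
  measurable_fun setT Y /\
  ((fun n => (\int[P]_x (((S n x - Y x) ^+ 2)%:E))%E) @ \oo --> 0%E).

Definition qm_convergent {d} {T : measurableType d} {R : realType}
  (P : probability T R) (S : nat -> T -> R) : Prop :=
  exists Y : T -> R, qm_cvg P S Y.

(* Main.v *)
Require Import Defs.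
From HB Require Import structures.
From mathcomp Require Import all_boot all_order all_algebra.
From mathcomp Require Import all_classical all_reals all_analysis.
From mathcomp Require Import ring lra zify measurable_realfun.
Import Order.TTheory GRing.Theory Num.Theory numFieldNormedType.Exports.
Local Open Scope ring_scope.

Section GR.
Variable R : realType.
Implicit Types a e d : R.

Lemma gr0 a : gamma_ratio a 0 = 1.
Proof. by rewrite /gamma_ratio big_geq. Qed.

Lemma grS a n : gamma_ratio a n.+1 = gamma_ratio a n * ((n%:R + a) / n.+1%:R).
Proof. by rewrite /gamma_ratio big_nat_recr. Qed.

Lemma gr_shift a n : gamma_ratio a n.+1 = a / n.+1%:R * gamma_ratio (a + 1) n.
Proof.
elim: n => [|n IH]; first by rewrite grS !gr0 /= add0r mul1r mulr1.
rewrite grS IH grS -!mulrA; congr (_ * _).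
have h1 : (n.+1%:R : R) != 0 by rewrite pnatr_eq0.
have h2 : (n.+2%:R : R) != 0 by rewrite pnatr_eq0.
move: h1 h2; rewrite -!natr1 => h1 h2; field.
by rewrite h1 h2.
Qed.

Lemma gr_gt0 a n : 0 < a -> 0 < gamma_ratio a n.
Proof.
move=> a0; elim: n => [|n IH]; first by rewrite gr0.
rewrite grS mulr_gt0 // divr_gt0 // ?ltr0n //.
by rewrite ltr_wpDl.
Qed.

Lemma gr_le1 a n : 0 < a <= 1 -> gamma_ratio a n <= 1.
Proof.
move=> /andP[a0 a1]; elim: n => [|n IH]; first by rewrite gr0.
rewrite grS; apply: mulr_ile1 => //; first exact/ltW/gr_gt0.
  by rewrite divr_ge0 // ?ler0n // addr_ge0 // ltW.
by rewrite ler_pdivrMr ?ltr0n // mul1r -natr1 lerD2l.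
Qed.

Lemma pi_abs_sum e N : 0 < e < 1 ->
  \sum_(j < N.+1) `|gamma_ratio (- e) j| = 2 - gamma_ratio (1 - e) N.
Proof.
move=> /andP[e0 e1]; elim: N => [|N IH].
  by rewrite big_ord_recr big_ord0 /= !gr0 add0r normr1; lra.
rewrite big_ord_recr /= IH gr_shift (addrC (-e)) grS.
have g0 : 0 < gamma_ratio (1 - e) N by apply: gr_gt0; lra.
have hN : (0 : R) < N.+1%:R by rewrite ltr0n.
rewrite normrM [`|gamma_ratio _ _|]gtr0_norm // normrM normrN gtr0_norm //.
idtac.
move: hN; rewrite -natr1 => hN.
rewrite (gtr0_norm e0); field; lra.
Qed.

Lemma pi_abs_sum_le2 e N : 0 < e < 1 -> \sum_(j < N) `|gamma_ratio (- e) j| <= 2.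
Proof.
move=> he; case: N => [|N]; first by rewrite big_ord0.
rewrite pi_abs_sum //; have : 0 < gamma_ratio (1 - e) N.
  by apply: gr_gt0; case/andP: he => *; lra.
lra.
Qed.

Lemma pi_neq0 e j : 0 < e < 1 -> gamma_ratio (- e) j != 0.
Proof.
move=> /andP[e0 e1]; case: j => [|j]; first by rewrite gr0 oner_neq0.
rewrite gr_shift mulf_neq0 // ?mulf_neq0 ?invr_eq0 ?pnatr_eq0 ?oppr_eq0 ?gt_eqF //.
by apply: gr_gt0; lra.
Qed.

End GR.

Section BSec.

Lemma psi_sq_bound (R : realType) (d : R) : 0 < d < 1/2 ->
  exists K, forall n, \sum_(j < n) gamma_ratio d j ^+ 2 <= K.
Proof.
move=> /andP[d0 d1].
set e := (1 - 2 * d) / 2.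
have e0 : 0 < e < 1 by rewrite /e; apply/andP; split; lra.
have [e0' e1'] : 0 < e /\ e < 1 by case/andP: e0.
set b := fun j => `|gamma_ratio (- e) j|.
have bpos j : 0 < b j by rewrite /b normr_gt0 pi_neq0.
have bS j : (1 <= j)%N -> b j.+1 = b j * ((j%:R - e) / j.+1%:R).
  move=> j1; rewrite /b grS normrM (addrC _ (-e)) addrC; congr (_ * _).
  apply: gtr0_norm; apply: divr_gt0; last by rewrite ltr0n.
  have : (1 : R) <= j%:R by rewrite ler1n.
  lra.
have b_le j : b j.+1 <= b j.
  case: j => [|j].
    rewrite /b grS !gr0 mul1r add0r.
    by rewrite divr1 normrN normr1 gtr0_norm // ltW.
  rewrite bS //; apply: ler_piMr; first exact: ltW.
  rewrite ler_pdivrMr ?ltr0n // mul1r -(natr1 j.+1).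
  lra.
have bmono j k : (j <= k)%N -> b k <= b j.
  move/subnK => <-; elim: (k - j)%N => [|m IH]; first by rewrite add0n.
  by rewrite addSn; exact: le_trans (b_le _) IH.
set J := (Num.truncn (d ^+ 2 / e)).+2.
have hJ : d ^+ 2 / e + 1 <= J%:R.
  have := truncnS_gt (d ^+ 2 / e); rewrite /J -(natr1 (Num.truncn _).+1).
  lra.
have g01 j : 0 < gamma_ratio d j <= 1.
  apply/andP; split; first exact: gr_gt0.
  apply: gr_le1; apply/andP; split; lra.
have gsq1 j : gamma_ratio d j ^+ 2 <= 1.
  have /andP[h1 h2] := g01 j.
  by apply: exprn_ile1 => //; exact: ltW.
have key j : gamma_ratio d j ^+ 2 * b J <= b j.
  case: (leqP j J) => hj.
    apply: le_trans (bmono _ _ hj).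
    by apply: ler_piMl; [exact: ltW | exact: gsq1].
  move: hj => /ltnW /subnK <-; elim: (j - J)%N => [|k IH].
    by rewrite add0n; apply: ler_piMl; [exact: ltW | exact: gsq1].
  rewrite addSn grS bS; last by rewrite addn_gt0 orbC.
  set m := (k + J)%N in IH *.
  set x : R := m%:R.
  have xJ : J%:R <= x by rewrite /x ler_nat /m leq_addl.
  have ex : d ^+ 2 + e <= e * x.
    have h : d ^+ 2 / e + 1 <= x by exact: le_trans hJ xJ.
    have := ler_wpM2l (ltW e0') h.
    rewrite mulrDr mulr1 mulrCA divff ?mulr1 //; last exact: lt0r_neq0.
  have x1 : 1 <= x by apply: le_trans xJ; rewrite /J ler1n.
  have r2 : ((x + d) / m.+1%:R) ^+ 2 <= (x - e) / m.+1%:R.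
    rewrite /x -(natr1 m) -/x expr_div_n ler_pdivrMr; last first.
      by apply: exprn_gt0; lra.
    have -> : (x - e) / (x + 1) * (x + 1) ^+ 2 = (x - e) * (x + 1).
      by field; lra.
    have -> : e = (1 - 2 * d) / 2 by [].
    rewrite /e in ex. nra.
  rewrite exprMn -mulrA (mulrC _ (b J)) mulrA.
  apply: le_trans (ler_wpM2r _ IH) _; first exact: sqr_ge0.
  apply: ler_wpM2l; first exact: ltW.
  exact: r2.
exists (2 / b J) => n.
apply: le_trans (_ : \sum_(j < n) b j * (b J)^-1 <= _).
  apply: ler_sum => j _; rewrite ler_pdivlMr //; exact: key.
rewrite -mulr_suml; apply: ler_wpM2r; first by rewrite invr_ge0 ltW.
exact: pi_abs_sum_le2.
Qed.

End BSec.
Section CSec.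

Lemma cs_sum (R : realType) (w y : nat -> R) n : (forall k, 0 <= w k) ->
  (\sum_(k < n) w k * y k) ^+ 2 <= (\sum_(k < n) w k) * \sum_(k < n) w k * y k ^+ 2.
Proof.
move=> w0; elim: n => [|n IH]; first by rewrite !big_ord0 mul0r expr0n.
rewrite !big_ord_recr /=.
set W := \sum_(i < n) w i in IH *; set A := \sum_(i < n) w i * y i in IH *.
set B := \sum_(i < n) w i * y i ^+ 2 in IH *.
have W0 : 0 <= W by apply: sumr_ge0 => i _.
have B0 : 0 <= B by apply: sumr_ge0 => i _; apply: mulr_ge0 => //; exact: sqr_ge0.
have wn := w0 n.
suff h : 0 <= W * y n ^+ 2 - 2 * A * y n + B.
  have : 0 <= w n * (W * y n ^+ 2 - 2 * A * y n + B) by exact: mulr_ge0.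
  move: IH; rewrite !expr2 => IH; nra.
have [W00|Wpos] := eqVneq W 0.
  rewrite W00 mul0r expr2 in IH.
  have -> : A = 0 by nra.
  rewrite W00; lra.
have Wp : 0 < W by rewrite lt_def Wpos W0.
suff : 0 <= W * (W * y n ^+ 2 - 2 * A * y n + B).
  by rewrite pmulr_rge0.
move: IH; rewrite !expr2 => IH.
have : 0 <= (W * y n - A) * (W * y n - A) by rewrite -expr2 sqr_ge0.
rewrite ?expr2.
nra.
Qed.

Lemma sum_split (R : realType) (g : nat -> R) n m :
  \sum_(j < m + n) g j = \sum_(j < n) g j + \sum_(k < m) g (k + n)%N.
Proof.
rewrite addnC big_split_ord /=; congr (_ + _).
by apply: eq_bigr => k _; rewrite addnC.
Qed.

End CSec.

Section L2.
Local Open Scope classical_set_scope.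
Context dT (T : measurableType dT) (R : realType) (P : probability T R).
Variables (c : nat -> R) (f : nat -> T -> R) (M Cc : R).
Hypothesis mf : forall j, measurable_fun setT (f j).
Hypothesis fM : forall j, (\int[P]_x ((f j x) ^+ 2)%:E <= M%:E)%E.
Hypothesis c0 : forall j, c j != 0.
Hypothesis cS : forall n, \sum_(j < n) `|c j| <= Cc.

Let S n x := \sum_(j < n) c j * f j x.
Let Tn n : \bar R := (\sum_(k <oo) (`|c (k + n)%N|)%:E)%E.
Let B n x : \bar R := (\sum_(k <oo) ((`|c (k + n)%N| * f (k + n)%N x ^+ 2)%:E))%E.

Let Tn_ge0 n : (0 <= Tn n)%E.
Proof. by apply: nneseries_ge0 => k _ _; rewrite lee_fin. Qed.

Let Tn_le n : (Tn n <= Cc%:E)%E.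
Proof.
apply: lime_le; first by apply: is_cvg_nneseries => k _ _; rewrite lee_fin.
apply: nearW => m; rewrite sumEFin lee_fin.
apply: le_trans (cS (m + n)); rewrite (@sum_split R (fun j => `|c j|)) big_mkord lerDr.
by apply: sumr_ge0 => j _.
Qed.

Let Tn_fin n : Tn n \is a fin_num.
Proof.
rewrite ge0_fin_numE ?Tn_ge0 //; exact: (le_lt_trans (Tn_le n) (ltry _)).
Qed.

Let Tn_cvg : (Tn n @[n --> \oo] --> 0)%E.
Proof.
have h0 : (\sum_(0 <= k <oo | xpredT k) (`|c k|)%:E < +oo)%E.
  apply: le_lt_trans (ltry Cc).
  apply: lime_le; first by apply: is_cvg_nneseries => k _ _; rewrite lee_fin.
  by apply: nearW => m; rewrite sumEFin lee_fin big_mkord.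
have := nneseries_tail_cvg h0 (fun k _ => normr_ge0 (c k)).
suff -> : Tn = (fun N => \sum_(N <= k <oo | xpredT k) (`|c k|)%:E)%E by [].
apply/funext => N; rewrite /Tn (@nneseries_addn R (fun i => (`|c i|)%:E)) //.

Qed.

Let Y x := fine (limn_esup (fun m => (S m x)%:E)).

Let pw n x : (((S n x - Y x) ^+ 2)%:E <= Tn n * B n x)%E.
Proof.
pose F := fun k => `|c (k + n)%N| * f (k + n)%N x ^+ 2.
have F0 k : 0 <= F k by rewrite mulr_ge0 // sqr_ge0.
have B0 : (0 <= B n x)%E by apply: nneseries_ge0 => k _ _; exact: (F0 k).
have [Binf|Bfin] := eqVneq (B n x) +oo%E.
  have cT : ((`|c n|)%:E <= Tn n)%E.
    have := @nneseries_lim_ge R (fun k => (`|c (k + n)%N|)%:E) xpredT 0 1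
      (fun k _ _ => normr_ge0 _).
    by rewrite big_nat1 add0n.
  have Tpos : (0 < Tn n)%E.
    by apply: lt_le_trans cT; rewrite lte_fin normr_gt0.
  by rewrite Binf gt0_muley // leey.
have Bf : B n x \is a fin_num by rewrite ge0_fin_numE // ltey.
set bb := fine (B n x); have Bbb : B n x = bb%:E by rewrite fineK.
set tn := fine (Tn n); have Ttn : Tn n = tn%:E by rewrite fineK.
have tn0 : 0 <= tn by rewrite -lee_fin -Ttn.
have bb0 : 0 <= bb by rewrite -lee_fin -Bbb.
have pF m : \sum_(k < m) F k <= bb.
  have := @nneseries_lim_ge R (fun k => (F k)%:E) xpredT 0 m (fun k _ _ => F0 k).
  by rewrite -/(B n x) Bbb sumEFin lee_fin big_mkord.
have pC m : \sum_(k < m) `|c (k + n)%N| <= tn.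
  have := @nneseries_lim_ge R (fun k => (`|c (k + n)%N|)%:E) xpredT 0 m
      (fun k _ _ => normr_ge0 _).
  by rewrite -/(Tn n) Ttn sumEFin lee_fin big_mkord.
have CS m : (\sum_(k < m) `|c (k + n)%N| * `|f (k + n)%N x|) ^+ 2 <= tn * bb.
  apply: le_trans (@cs_sum R (fun k => `|c (k + n)%N|) (fun k => `|f (k + n)%N x|) m (fun k => normr_ge0 _)) _.
  apply: ler_pM => //; first exact: sumr_ge0.
    by apply: sumr_ge0 => k _; rewrite mulr_ge0 // sqr_ge0.
  apply: le_trans (pF m); apply: ler_sum => k _.
  by rewrite /F real_normK // num_real.
have absb m : \sum_(k < m) `|c (k + n)%N| * `|f (k + n)%N x| <= 1 + tn * bb.
  have := CS m; set v := \sum_(k < m) _.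
  have : 0 <= v by apply: sumr_ge0 => k _; rewrite mulr_ge0.
  rewrite expr2; nra.
pose u : R ^nat := fun j => c j * f j x.
have Su m : S m x = series u m by rewrite /series /= big_mkord.
have cvgu : cvgn (series u).
  apply: normed_cvg; apply: nondecreasing_is_cvgn.
    by apply: nondecreasing_series => k _ _; exact: normr_ge0.
  exists (\sum_(j < n) `|u j| + (1 + tn * bb)) => _ [m _ <-] /=.
  apply: (@le_trans _ _ (\sum_(0 <= j < m + n) `|u j|)).
    have := @nondecreasing_series R (fun j => `|u j|) xpredT 0 (fun _ _ _ => normr_ge0 _).
    by move/(_ m (m + n)%N (leq_addr _ _)).
  rewrite big_mkord (@sum_split R (fun j => `|u j|)) lerD2l.
  apply: le_trans (absb m); apply: ler_sum => k _.
  by rewrite /u normrM.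
set l := limn (series u).
have Sl : S m x @[m --> \oo] --> l.
  have -> : (fun m => S m x) = series u by apply/funext => m; rewrite Su.
  exact: cvgu.
have Yl : Y x = l.
  have SE : ((S m x)%:E @[m --> \oo] --> l%:E)%E.
    by apply: cvg_EFin; [exact: nearW | exact: Sl].
  by rewrite /Y is_cvg_limn_esupE ?(cvg_lim _ SE) //; apply/cvg_ex; exists l%:E.
have vle m : (S (m + n)%N x - S n x) * (S (m + n)%N x - S n x) <= tn * bb.
  have -> : S (m + n)%N x - S n x = \sum_(k < m) u (k + n)%N.
    by rewrite /S (@sum_split R u) addrC addKr.
  have h1 : `|\sum_(k < m) u (k + n)%N| <= \sum_(k < m) `|c (k + n)%N| * `|f (k + n)%N x|.
    apply: le_trans (ler_norm_sum _ _ _) _; apply: ler_sum => k _.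
    by rewrite /u normrM.
  have := CS m; move: h1; set s := \sum_(k < m) u _; set t := \sum_(k < m) _.
  rewrite ler_norml expr2 => /andP[h2 h3] h4.
  nra.
have vcvg : (S (m + n)%N x - S n x) * (S (m + n)%N x - S n x) @[m --> \oo]
    --> (l - S n x) * (l - S n x).
  have h : S (m + n)%N x @[m --> \oo] --> l.
    by rewrite (cvg_shiftn n (fun m => S m x)).
  apply: cvgM; apply: cvgB => //; exact: cvg_cst.
have : (l - S n x) * (l - S n x) <= tn * bb.
  rewrite -(cvg_lim _ vcvg) //; apply: limr_le; first by apply/cvg_ex; eexists; exact: vcvg.
  exact: nearW.
by rewrite Yl Ttn Bbb -EFinM lee_fin expr2 -opprB mulrNN.
Qed.

Let mS m : measurable_fun setT (S m).
Proof.
apply: measurable_sum => j; apply: measurable_realfun.measurable_funM => //; exact: measurable_cst.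
Qed.

Let mB n : measurable_fun [set: T] (B n : T -> \bar R).
Proof.
have := @ge0_emeasurable_sum _ _ R setT
  (fun k x => (`|c (k + n)%N| * f (k + n)%N x ^+ 2)%:E) xpredT _ _.
apply.
- by move=> k x _ _; rewrite lee_fin mulr_ge0 // sqr_ge0.
- move=> k _; apply/measurable_EFinP; apply: measurable_realfun.measurable_funM.
    exact: measurable_cst.
  exact: measurable_funX.
Qed.

Let intB n : (\int[P]_x (Tn n * B n x) <= (fine (Tn n) * (M * fine (Tn n)))%:E)%E.
Proof.
set tn := fine (Tn n).
have Ttn : Tn n = tn%:E by rewrite fineK.
have tn0 : 0 <= tn by rewrite -lee_fin -Ttn.
under eq_integral do rewrite Ttn.
rewrite ge0_integralZl_EFin //; last first.
  by move=> x _; apply: nneseries_ge0 => k _ _; rewrite lee_fin mulr_ge0 // sqr_ge0.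
rewrite EFinM lee_wpmul2l ?lee_fin //.
rewrite /B integral_nneseries //; last 2 first.
- move=> k; apply/measurable_EFinP; apply: measurable_funM.
    exact: measurable_cst.
  exact: measurable_funX.
- by move=> k x _; rewrite lee_fin mulr_ge0 // sqr_ge0.
apply: (@le_trans _ _ (\sum_(k <oo) (M%:E * (`|c (k + n)%N|)%:E))%E).
  apply: lee_nneseries.
    by move=> k _ _; apply: integral_ge0 => x _; rewrite lee_fin mulr_ge0 // sqr_ge0.
  move=> k _.
  under eq_integral do rewrite EFinM.
  rewrite ge0_integralZl_EFin //; last first.
    by apply/measurable_EFinP; exact: measurable_funX.
    by move=> x _; rewrite lee_fin sqr_ge0.
  by rewrite muleC lee_wpmul2r ?lee_fin.
rewrite nneseriesZl; last by move=> k _; rewrite lee_fin.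
by rewrite -/(Tn n) Ttn -EFinM.
Qed.

Lemma L2_main : qm_convergent P (fun n x => \sum_(j < n) c j * f j x).
Proof.
exists Y; split.
  apply: measurableT_comp => //.
  apply: measurable_fun_limn_esup => m.
  by apply/measurable_EFinP; exact: mS.
have mY : measurable_fun setT Y.
  apply: measurableT_comp => //.
  apply: measurable_fun_limn_esup => m.
  by apply/measurable_EFinP; exact: mS.
apply: (@squeeze_cvge _ _ _ _ (fun _ => 0%E) _
  (fun n => (fine (Tn n) * (M * fine (Tn n)))%:E)).
- apply: nearW => n; apply/andP; split.
    by apply: integral_ge0 => x _; rewrite lee_fin sqr_ge0.
  apply: le_trans (intB n); apply: ge0_le_integral => //.
  + by move=> x _; rewrite lee_fin sqr_ge0.
  + apply/measurable_EFinP; apply: measurable_funX.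
    exact: measurable_funB (mS n) mY.
  + apply: emeasurable_funM => //; exact: measurable_cst.
  + by move=> x _; exact: pw.
- exact: cvg_cst.
- apply: cvg_EFin; first exact: nearW.
  have ft : (fun n => fine (Tn n)) @ \oo --> 0 by exact: (fine_cvg Tn_cvg).
  have := cvgM ft (cvgM (cvg_cst M) ft).
  move=> /(_ _ _ _) h; rewrite mulr0 mul0r in h. exact: h.
Qed.

End L2.

Section Ortho.
Local Open Scope classical_set_scope.
Context dT (T : measurableType dT) (R : realType) (P : probability T R).
Variable eps : int -> T -> R.
Hypothesis meps : forall t, measurable_fun setT (eps t).
Hypothesis ieps : forall t, P.-integrable setT (fun x => ((eps t x) ^+ 2)%:E).
Hypothesis oeps : forall s t : int, s != t -> (\int[P]_x (eps s x * eps t x)%:E = 0)%E.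

Lemma intM s t : P.-integrable setT (fun x => (eps s x * eps t x)%:E).
Proof.
apply: le_integrable (integrableD _ (ieps s) (ieps t)) => //.
  by apply/measurable_EFinP; exact: measurable_funM.
move=> x _ /=; rewrite lee_fin.
apply: le_trans (ler_norm _); rewrite normrM.
have h1 := normr_ge0 (eps s x); have h2 := normr_ge0 (eps t x).
rewrite -!(real_normK (num_real (eps _ x))).
nra.
Qed.

Lemma ortho_int (a : nat -> R) (u : nat -> int) n :
  (forall j k, j != k -> u j != u k) ->
  (\int[P]_x (((\sum_(j < n) a j * eps (u j) x) ^+ 2)%:E) =
   \sum_(j < n) (a j ^+ 2)%:E * \int[P]_x (((eps (u j) x) ^+ 2)%:E))%E.
Proof.
move=> uinj.
have E x : (\sum_(j < n) a j * eps (u j) x) ^+ 2 =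
    \sum_(j < n) \sum_(k < n) (a j * a k) * (eps (u j) x * eps (u k) x).
  rewrite expr2 mulr_suml; apply: eq_bigr => j _; rewrite mulr_sumr.
  by apply: eq_bigr => k _; rewrite mulrACA.
under eq_integral do rewrite E -sumEFin.
rewrite integral_sum //; last first.
  move=> j; under eq_fun do rewrite -sumEFin.
  apply: integrable_sum => // k _.
  under eq_fun do rewrite EFinM.
  exact: integrableZl (intM _ _).
apply: eq_bigr => j _.
under eq_integral do rewrite -sumEFin.
rewrite integral_sum //; last first.
  by move=> k; under eq_fun do rewrite EFinM; exact: integrableZl (intM _ _).
rewrite (bigD1 j) //= big1 ?adde0; last first.
  move=> k kj; under eq_integral do rewrite EFinM.
  rewrite integralZl //; last exact: intM.
  rewrite oeps ?mule0 //; apply: uinj; by rewrite eq_sym.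
under eq_integral do rewrite EFinM.
by rewrite integralZl ?intM // -expr2; under eq_integral do rewrite -expr2.
Qed.

End Ortho.

Lemma dec_int (p : nat) (s : int) : (0 < p)%N ->
  exists2 ii : nat, (1 <= ii <= p)%N & exists mm : int, s = ii%:Z + p%:Z * mm.
Proof.
move=> p0.
have pz : (p%:Z != 0) by rewrite eqz_nat -lt0n.
set r := ((s - 1) %% p%:Z)%Z.
have r0 : 0 <= r by exact: modz_ge0.
have rp : r < p%:Z by apply: ltz_pmod; rewrite ltz_nat.
have sr := divz_eq (s - 1) p%:Z.
exists (absz r).+1.
  apply/andP; split => //.
  have : (absz r)%:Z = r by rewrite gez0_abs.
  lia.
exists ((s - 1) %/ p%:Z)%Z.
have : (absz r)%:Z = r by rewrite gez0_abs.
rewrite -/r in sr.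
lia.
Qed.

Theorem proposition2 (R : realType) (dT : measure_display) (T : measurableType dT)
  (P : probability T R) (p : nat) (d : nat -> R)
  (eps : int -> T -> R) (X : int -> T -> R) :
  (1 < p)%N ->
  (forall i : nat, (1 <= i <= p)%N -> 0 < d i < 1 / 2) ->
  (forall t : int, measurable_fun setT (eps t)) ->
  (forall t : int, P.-integrable setT (fun x => ((eps t x) ^+ 2)%:E)) ->
  (forall t : int, (\int[P]_x (eps t x)%:E = 0)%E) ->
  (forall s t : int, s != t -> (\int[P]_x (eps s x * eps t x)%:E = 0)%E) ->
  (forall t : int, (\int[P]_x ((eps (t + p%:Z) x) ^+ 2)%:E
             = \int[P]_x ((eps t x) ^+ 2)%:E)%E) ->
  (forall (i : nat) (m : int), (1 <= i <= p)%N ->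
     qm_cvg P
       (fun n x => \sum_(j < n) psi_coef (d i) j * eps (i%:Z + p%:Z * m - j%:Z) x)
       (X (i%:Z + p%:Z * m))) ->
  forall (i : nat) (m : int), (1 <= i <= p)%N ->
    qm_convergent P
      (fun n x => \sum_(j < n) pi_coef (d i) j * X (i%:Z + p%:Z * m - j%:Z) x).
Proof.
move=> p1 dI meps ieps e0 oeps per hX i m hi.
have p0 : (0 < p)%N by apply: ltn_trans p1.
set sig := fun t : int => fine (\int[P]_x ((eps t x) ^+ 2)%:E).
have sigE t : (\int[P]_x ((eps t x) ^+ 2)%:E = (sig t)%:E)%E.
  by rewrite fineK // integrable_fin_num.
have sig0 t : 0 <= sig t.
  by rewrite -lee_fin -sigE; apply: integral_ge0 => x _; rewrite lee_fin sqr_ge0.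
have sigP t (n : nat) : sig (t + n%:Z * p%:Z) = sig t.
  elim: n => [|n IH]; first by rewrite mul0r addr0.
  rewrite -IH /sig -[in RHS]per; congr (fine _); apply: eq_integral => x _.
  by have -> : t + n.+1%:Z * p%:Z = t + n%:Z * p%:Z + p%:Z by lia.
have sig_mod t : sig t = sig ((t %% p%:Z)%Z).
  have tE := divz_eq t p%:Z.
  case E : (t %/ p%:Z)%Z => [n|n]; rewrite E in tE.
    by rewrite {1}tE addrC sigP.
  have -> : ((t %% p%:Z)%Z) = t + n.+1%:Z * p%:Z.
    rewrite {2}tE NegzE; lia.
  by rewrite sigP.
set Ssig := \sum_(k < p) sig k%:Z.
have sig_le t : sig t <= Ssig.
  have pz : (p%:Z != 0) by rewrite eqz_nat -lt0n.
  have r0 : 0 <= (t %% p%:Z)%Z by exact: modz_ge0.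
  have rp : ((t %% p%:Z)%Z < p%:Z) by apply: ltz_pmod; rewrite ltz_nat.
  have kp : (absz (t %% p%:Z)%Z < p)%N.
    by rewrite -ltz_nat gez0_abs.
  rewrite sig_mod -(gez0_abs r0) /Ssig (bigD1 (Ordinal kp)) //= lerDl.
  by apply: sumr_ge0 => k _.
have /boolp.choice [K hK] : forall ii : nat, exists K : R,
    (1 <= ii <= p)%N -> forall n, \sum_(j < n) psi_coef (d ii) j ^+ 2 <= K.
  move=> ii; case: (boolP (1 <= ii <= p)%N) => h.
    have [K hK] := @psi_sq_bound R (d ii) (dI ii h); by exists K.
  by exists 0 => h'; exfalso; move/negP: h; apply.
set Kmax := \sum_(ii < p.+1) `|K ii|.
have Kle ii : (1 <= ii <= p)%N -> K ii <= Kmax.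
  move=> /andP[_ iip]; rewrite -ltnS in iip.
  apply: le_trans (ler_norm _) _.
  rewrite /Kmax (bigD1 (Ordinal iip)) //= lerDl.
  by apply: sumr_ge0 => k _.
have Kmax0 : 0 <= Kmax by apply: sumr_ge0 => k _.
have Ssig0 : 0 <= Ssig by apply: sumr_ge0 => k _.
set MM := 2 + 2 * (Kmax * Ssig).
have Xb s : measurable_fun setT (X s) /\
    (\int[P]_x ((X s x) ^+ 2)%:E <= MM%:E)%E.
  have [ii hii [mm ->]] := @dec_int p s p0.
  have [mX cX] := hX ii mm hii.
  split => //.
  set u := fun j : nat => ii%:Z + p%:Z * mm - j%:Z.
  set Sp := fun n x => \sum_(j < n) psi_coef (d ii) j * eps (u j) x.
  set Xs := X (ii%:Z + p%:Z * mm).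
  have mSp n : measurable_fun setT (Sp n).
    apply: measurable_sum => j; apply: measurable_funM => //; exact: measurable_cst.
  move/fine_cvgP: cX => [cf cr].
  have := cvgr_lt _ cr _ ltr01.
  move=> /(_ _) h2; have [N _ hN] := filterI cf h2.
  have [qfin qlt] := hN N (leqnn N).
  set q := (\int[P]_x ((Sp N x - Xs x) ^+ 2)%:E)%E in qfin qlt.
  have q1 : fine q <= 1 by exact: ltW.
  have q0 : 0 <= fine q.
    by rewrite -lee_fin fineK //; apply: integral_ge0 => x _; rewrite lee_fin sqr_ge0.
  have oS : (\int[P]_x ((Sp N x) ^+ 2)%:E =
      \sum_(j < N) (psi_coef (d ii) j ^+ 2)%:E * \int[P]_x ((eps (u j) x) ^+ 2)%:E)%E.
    apply: ortho_int => //.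
    by move=> j k /eqP jk; apply/eqP => h; apply: jk; rewrite /u in h; lia.
  have oS' : (\int[P]_x ((Sp N x) ^+ 2)%:E <= (Kmax * Ssig)%:E)%E.
    rewrite oS; under eq_bigr do rewrite sigE -EFinM.
    rewrite sumEFin lee_fin.
    apply: (@le_trans _ _ (\sum_(j < N) psi_coef (d ii) j ^+ 2 * Ssig)).
      by apply: ler_sum => j _; apply: ler_wpM2l; [exact: sqr_ge0 | exact: sig_le].
    rewrite -mulr_suml; apply: ler_wpM2r => //.
    apply: le_trans (Kle _ hii); exact: hK.
  apply: (@le_trans _ _ (\int[P]_x ((2 * (Sp N x - Xs x) ^+ 2)%:E + (2 * (Sp N x) ^+ 2)%:E))%E).
    apply: ge0_le_integral => //.
    + by move=> x _; rewrite lee_fin sqr_ge0.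
    + by apply/measurable_EFinP; exact: measurable_funX.
    + apply: emeasurable_funD; apply/measurable_EFinP; apply: measurable_funM.
      * exact: measurable_cst.
      * by apply: measurable_funX; exact: measurable_funB.
      * exact: measurable_cst.
      * exact: measurable_funX.
    + move=> x _; rewrite -EFinD lee_fin.
      set a := Sp N x; set b := Xs x.
      have := sqr_ge0 (2 * a - b); rewrite !expr2; nra.
  rewrite ge0_integralD //; last 4 first.
  + by move=> x _; rewrite lee_fin mulr_ge0 // sqr_ge0.
  + apply/measurable_EFinP; apply: measurable_funM; first exact: measurable_cst.
    by apply: measurable_funX; exact: measurable_funB.
  + by move=> x _; rewrite lee_fin mulr_ge0 // sqr_ge0.
  + apply/measurable_EFinP; apply: measurable_funM; first exact: measurable_cst.
    exact: measurable_funX.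
  have I1 : (\int[P]_x (2 * (Sp N x - Xs x) ^+ 2)%:E = 2%:E * q)%E.
    under eq_integral do rewrite EFinM.
    rewrite ge0_integralZl_EFin //.
    + by move=> x _; rewrite lee_fin sqr_ge0.
    + by apply/measurable_EFinP; apply: measurable_funX; exact: measurable_funB.
  have I2 : (\int[P]_x (2 * (Sp N x) ^+ 2)%:E = 2%:E * \int[P]_x ((Sp N x) ^+ 2)%:E)%E.
    under eq_integral do rewrite EFinM.
    rewrite ge0_integralZl_EFin //.
    + by move=> x _; rewrite lee_fin sqr_ge0.
    + by apply/measurable_EFinP; exact: measurable_funX.
  rewrite I1 I2.
  rewrite -(fineK qfin) -EFinM.
  apply: (@le_trans _ _ ((2 * fine q)%:E + (2%:E * (Kmax * Ssig)%:E)))%E.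
    by apply: leeD => //; apply: lee_wpmul2l.
  by rewrite -EFinM -EFinD lee_fin /MM; lra.
apply: (@L2_main _ _ R P (pi_coef (d i)) (fun j => X (i%:Z + p%:Z * m - j%:Z)) MM 2).
- by move=> j; exact: (Xb _).1.
- by move=> j; exact: (Xb _).2.
- move=> j; apply: pi_neq0; have := dI i hi; case/andP => h1 h2.
  apply/andP; split => //; lra.
- move=> n; apply: pi_abs_sum_le2; have := dI i hi; case/andP => h1 h2.
  apply/andP; split => //; lra.
Qed.
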